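(* In every psi-calculus: let $B\subseteq\mathcal N$ be finite with $B\#P$, let $\Psi\rhd P\xrightarrow{\alpha}P'$ with $\alpha\neq\tau$, and let $\mathcal F(P)=(\nu\tilde b_P)\Psi_P$ with $\tilde b_P\#\Psi,P,\mathrm{subj}(\alpha),B$. Then there exists a term $M$ such that $B\#M$ and $\Psi\otimes\Psi_P\vdash M\leftrightarrow\mathrm{subj}(\alpha)$.
   Context: Names: a countably infinite set $\mathcal N$ of atomic names. A nominal set is a set equipped with name swapping operations $(a\;b)\cdot X$ satisfying the usual axioms; the support $\mathrm n(X)$ of an element is the set of names affected by swappings, assumed finite; $a \# X$ (''$a$ fresh for $X$'') means $a\notin \mathrm n(X)$, and $A\#X$ for a set/sequence $A$ means every element of $A$ is fresh for $X$. A function/relation is equivariant if it commutes with all swappings. $\tilde a$ denotes a finite sequence of names (also used as the set of its elements). Psi-calculus: given by three nominal datatypes $\mathbf T$ (terms, ranged over by $M,N,K,L$), $\mathbf C$ (conditions, $\varphi$), $\mathbf A$ (assertions, $\Psi$), equivariant operators $\leftrightarrow:\mathbf T\times\mathbf T\to\mathbf C$ (channel equivalence), $\otimes:\mathbf A\times\mathbf A\to\mathbf A$ (composition), $\mathbf 1\in\mathbf A$ (unit), $\vdash\subseteq\mathbf A\times\mathbf C$ (entailment), and equivariant substitution functions $X[\tilde a:=\tilde T]$ (substituting terms for distinct names) on $\mathbf T,\mathbf C,\mathbf A$ satisfying: (S1) if $\tilde a\subseteq\mathrm n(X)$ and $b\in\mathrm n(\tilde T)$ then $b\in\mathrm n(X[\tilde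 a:=\tilde T])$; (S2) if $\tilde b\# X,\tilde a$ then $X[\tilde a:=\tilde T]=((\tilde b\;\tilde a)\cdot X)[\tilde b:=\tilde T]$. Assertions are equivalent, $\Psi\simeq\Psi'$, if for all $\varphi$: $\Psi\vdash\varphi\iff\Psi'\vdash\varphi$. Required: $\Psi\vdash M\leftrightarrow N\Rightarrow\Psi\vdash N\leftrightarrow M$; $\Psi\vdash M\leftrightarrow N\wedge\Psi\vdash N\leftrightarrow L\Rightarrow\Psi\vdash M\leftrightarrow L$; $\Psi\simeq\Psi'\Rightarrow\Psi\otimes\Psi''\simeq\Psi'\otimes\Psi''$; $\Psi\otimes\mathbf 1\simeq\Psi$; $(\Psi\otimes\Psi')\otimes\Psi''\simeq\Psi\otimes(\Psi'\otimes\Psi'')$; $\Psi\otimes\Psi'\simeq\Psi'\otimes\Psi$. Frames: $(\nu\tilde b)\Psi$ with $\tilde b$ binding into $\Psi$, identified up to alpha-equivalence; $(\nu\tilde b_1)\Psi_1\otimes(\nu\tilde b_2)\Psi_2=(\nu\tilde b_1\tilde b_2)(\Psi_1\otimes\Psi_2)$ with $\tilde b_1\#\tilde b_2,\Psi_2$ and $\tilde b_2\#\tilde b_1,\Psi_1$. Agents: $\mathbf 0$; $\overline M N.P$ (output); $\underline M(\lambda\tilde x)N.P$ (input, $\tilde x\subseteq\mathrm n(N)$ without duplicates, binding in $N$ and $P$); $\mathbf{case}\ \varphi_1:P_1\,[\!]\cdots[\!]\,\varphi_n:P_n$; $(\nu a)P$ (binds $a$); $P\mid Q$; $!P$; $(\!|\Psi|\!)$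 (assertion). Agents are identified up to alpha-equivalence. In $!P$ and in each branch $P_i$ of a case, every assertion must occur under an input or output prefix. Substitution on agents is defined homomorphically, avoiding capture. Frame of an agent: $\mathcal F(\mathbf 0)=\mathcal F(\text{input})=\mathcal F(\text{output})=\mathcal F(\mathbf{case}\ldots)=\mathcal F(!P)=\mathbf 1$, $\mathcal F((\!|\Psi|\!))=\Psi$, $\mathcal F(P\mid Q)=\mathcal F(P)\otimes\mathcal F(Q)$, $\mathcal F((\nu b)P)=(\nu b)\mathcal F(P)$. Actions: output $\overline M(\nu\tilde a)N$ with $\tilde a\subseteq\mathrm n(N)$, input $\underline M N$, and $\tau$; $\mathrm{subj}(\overline M(\nu\tilde a)N)=\mathrm{subj}(\underline MN)=M$; $\mathrm{bn}(\overline M(\nu\tilde a)N)=\tilde a$, otherwise $\emptyset$; $\mathrm n(\tau)=\emptyset$, else $\mathrm n(M)\cup\mathrm n(N)$. Transitions $\Psi\rhd P\xrightarrow{\alpha}P'$ are the least relation closed under (symmetric versions of Com and Par included): In: $\Psi\vdash M\leftrightarrow K$ implies $\Psi\rhd\underline M(\lambda\tilde y)N.P\xrightarrow{\underline K\,N[\tilde y:=\tilde L]}P[\tilde y:=\tilde L]$ for any $\tilde L$. Out: $\Psi\vdash M\leftrightarrow K$ implies $\Psi\rhd\overline MN.P\xrightarrow{\overline KN}P$. Case: $\Psi\rhd P_i\xrightarrow\alpha P'$ and $\Psi\vdash\varphi_i$ imply $\Psi\rhd\mathbf{case}\ \tilde\varphi:\tilde P\xrightarrow\alpha P'$. Com: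 with $\mathcal F(P)=(\nu\tilde b_P)\Psi_P$, $\mathcal F(Q)=(\nu\tilde b_Q)\Psi_Q$, $\tilde b_P\#\Psi,\tilde b_Q,Q,M,P$, $\tilde b_Q\#\Psi,\tilde b_P,P,K,Q$: if $\Psi_Q\otimes\Psi\rhd P\xrightarrow{\overline M(\nu\tilde a)N}P'$, $\Psi_P\otimes\Psi\rhd Q\xrightarrow{\underline KN}Q'$, $\Psi\otimes\Psi_P\otimes\Psi_Q\vdash M\leftrightarrow K$ and $\tilde a\#Q$, then $\Psi\rhd P\mid Q\xrightarrow\tau(\nu\tilde a)(P'\mid Q')$. Par: with $\mathcal F(Q)=(\nu\tilde b_Q)\Psi_Q$, $\tilde b_Q\#\Psi,P,\alpha$: if $\Psi_Q\otimes\Psi\rhd P\xrightarrow\alpha P'$ and $\mathrm{bn}(\alpha)\#Q$ then $\Psi\rhd P\mid Q\xrightarrow\alpha P'\mid Q$. Scope: $\Psi\rhd P\xrightarrow\alpha P'$, $b\#\alpha,\Psi$ imply $\Psi\rhd(\nu b)P\xrightarrow\alpha(\nu b)P'$. Open: $\Psi\rhd P\xrightarrow{\overline M(\nu\tilde a)N}P'$, $b\#\tilde a,\Psi,M$, $b\in\mathrm n(N)$ imply $\Psi\rhd(\nu b)P\xrightarrow{\overline M(\nu\tilde a\cup\{b\})N}P'$. Rep: $\Psi\rhd P\mid !P\xrightarrow\alpha P'$ implies $\Psi\rhd !P\xrightarrow\alpha P'$. $\mathrm{bn}(\alpha)$ binds into the object and derivative; transitions are identified up to alpha-equivalence. *)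

(* Defs.v *)
From Stdlib Require Import List Arith.
Import ListNotations.

Definition name := nat.

Definition swap_name (a b c : name) : name :=
  if Nat.eqb c a then b else if Nat.eqb c b then a else c.

Record nominal := Nominal {
  ncar :> Type;
  nswap : name -> name -> ncar -> ncar;
  nswap_id : forall a x, nswap a a x = x;
  nswap_inv : forall a b x, nswap a b (nswap a b x) = x;
  nswap_conj : forall a b c d x,
      nswap a b (nswap c d x)
      = nswap (swap_name a b c) (swap_name a b d) (nswap a b x);
  nfinsupp : forall x, exists L : list name,
      forall a b, ~ In a L -> ~ In b L -> nswap a b x = x
}.
Arguments nswap {n}.

Definition fresh {X : nominal} (a : name) (x : X) : Prop :=
  exists L : list name, forall b, ~ In b L -> nswap a b x = x.

Definition in_supp {X : nominal} (a : name) (x : X) : Prop := ~ fresh a x.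

Fixpoint swaps {X : Type} (sw : name -> name -> X -> X)
    (xs cs : list name) (x : X) : X :=
  match xs, cs with
  | a :: xs', c :: cs' => sw a c (swaps sw xs' cs' x)
  | _, _ => x
  end.

Definition avoids (ds L : list name) : Prop := forall d, In d ds -> ~ In d L.

Definition subst_ok (X Tm : nominal)
    (sub : X -> list name -> list Tm -> X) : Prop :=
  (forall a b x xs Ts,
      nswap a b (sub x xs Ts)
      = sub (nswap a b x) (map (swap_name a b) xs) (map (nswap a b) Ts))
  /\ (forall x xs Ts b,
      NoDup xs -> length xs = length Ts ->
      (forall a, In a xs -> in_supp a x) ->
      (exists t, In t Ts /\ in_supp b t) ->
      in_supp b (sub x xs Ts))
  /\ (forall x xs ys Ts,
      NoDup xs -> length xs = length Ts ->
      NoDup ys -> length ys = length xs ->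
      (forall y, In y ys -> fresh y x /\ ~ In y xs) ->
      sub x xs Ts = sub (swaps nswap ys xs x) ys Ts).

Record psi := MkPsi {
  T : nominal;   (* terms *)
  C : nominal;   (* conditions *)
  A : nominal;   (* assertions *)
  chaneq : T -> T -> C;
  comp : A -> A -> A;
  unit : A;
  entails : A -> C -> Prop;
  substT : T -> list name -> list T -> T;
  substC : C -> list name -> list T -> C;
  substA : A -> list name -> list T -> A;
  chaneq_eqv : forall a b M N,
      nswap a b (chaneq M N) = chaneq (nswap a b M) (nswap a b N);
  comp_eqv : forall a b S S',
      nswap a b (comp S S') = comp (nswap a b S) (nswap a b S');
  unit_eqv : forall a b, nswap a b unit = unit;
  entails_eqv : forall a b S phi,
      entails S phi -> entails (nswap a b S) (nswap a b phi);
  substT_ok : subst_ok T T substT;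
  substC_ok : subst_ok C T substC;
  substA_ok : subst_ok A T substA;
  chan_sym : forall S M N, entails S (chaneq M N) -> entails S (chaneq N M);
  chan_trans : forall S M N L,
      entails S (chaneq M N) -> entails S (chaneq N L) ->
      entails S (chaneq M L);
  (* assertion equivalence laws (S ~ S' := forall phi, S |- phi <-> S' |- phi) *)
  comp_cong : forall S S' S'',
      (forall phi, entails S phi <-> entails S' phi) ->
      forall phi, entails (comp S S'') phi <-> entails (comp S' S'') phi;
  comp_unit : forall S phi, entails (comp S unit) phi <-> entails S phi;
  comp_assoc : forall S S' S'' phi,
      entails (comp (comp S S') S'') phi <-> entails (comp S (comp S' S'')) phi;
  comp_comm : forall S S' phi,
      entails (comp S S') phi <-> entails (comp S' S) phi
}.
Arguments chaneq {p}.
Arguments comp {p}.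
Arguments unit {p}.
Arguments entails {p}.
Arguments substT {p}.
Arguments substC {p}.
Arguments substA {p}.

Inductive agent (p : psi) : Type :=
| Nil : agent p
| Out : T p -> T p -> agent p -> agent p
| Inp : T p -> list name -> T p -> agent p -> agent p      (* M(\x~)N . P *)
| Case : branches p -> agent p
| Nu : name -> agent p -> agent p
| Par : agent p -> agent p -> agent p
| Bang : agent p -> agent p
| Ass : A p -> agent p
with branches (p : psi) : Type :=
| BNil : branches p
| BCons : C p -> agent p -> branches p -> branches p.

Arguments Nil {p}.
Arguments Out {p}.
Arguments Inp {p}.
Arguments Case {p}.
Arguments Nu {p}.
Arguments Par {p}.
Arguments Bang {p}.
Arguments Ass {p}.
Arguments BNil {p}.
Arguments BCons {p}.

Fixpoint swapA {p : psi} (a b : name) (P : agent p) : agent p :=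
  match P with
  | Nil => Nil
  | Out M N Q => Out (nswap a b M) (nswap a b N) (swapA a b Q)
  | Inp M xs N Q =>
      Inp (nswap a b M) (map (swap_name a b) xs) (nswap a b N) (swapA a b Q)
  | Case bs => Case (swapB a b bs)
  | Nu c Q => Nu (swap_name a b c) (swapA a b Q)
  | Par Q R => Par (swapA a b Q) (swapA a b R)
  | Bang Q => Bang (swapA a b Q)
  | Ass s => Ass (nswap a b s)
  end
with swapB {p : psi} (a b : name) (bs : branches p) : branches p :=
  match bs with
  | BNil => BNil
  | BCons phi Q bs' => BCons (nswap a b phi) (swapA a b Q) (swapB a b bs')
  end.

Inductive alpha {p : psi} : agent p -> agent p -> Prop :=
| al_nil : alpha Nil Nil
| al_out : forall M N P P', alpha P P' -> alpha (Out M N P) (Out M N P')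
| al_inp : forall M xs N P ys N' P',
    length xs = length ys ->
    (exists L : list name, forall ds, NoDup ds -> length ds = length xs ->
        avoids ds L ->
        swaps nswap xs ds N = swaps nswap ys ds N' /\
        alpha (swaps swapA xs ds P) (swaps swapA ys ds P')) ->
    alpha (Inp M xs N P) (Inp M ys N' P')
| al_case : forall bs bs', alphaB bs bs' -> alpha (Case bs) (Case bs')
| al_nu : forall a P b Q,
    (exists L : list name, forall c, ~ In c L ->
        alpha (swapA a c P) (swapA b c Q)) ->
    alpha (Nu a P) (Nu b Q)
| al_par : forall P P' Q Q', alpha P P' -> alpha Q Q' -> alpha (Par P Q) (Par P' Q')
| al_bang : forall P P', alpha P P' -> alpha (Bang P) (Bang P')
| al_ass : forall S, alpha (Ass S) (Ass S)
with alphaB {p : psi} : branches p -> branches p -> Prop :=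
| alB_nil : alphaB BNil BNil
| alB_cons : forall phi P P' bs bs',
    alpha P P' -> alphaB bs bs' -> alphaB (BCons phi P bs) (BCons phi P' bs').

Definition freshA {p : psi} (a : name) (P : agent p) : Prop :=
  exists L : list name, forall b, ~ In b L -> alpha (swapA a b P) P.

Fixpoint guarded {p : psi} (P : agent p) : Prop :=
  match P with
  | Nil => True
  | Out _ _ _ => True
  | Inp _ _ _ _ => True
  | Case bs => guardedB bs
  | Nu _ Q => guarded Q
  | Par Q R => guarded Q /\ guarded R
  | Bang Q => guarded Q
  | Ass _ => False
  end
with guardedB {p : psi} (bs : branches p) : Prop :=
  match bs with
  | BNil => True
  | BCons _ Q bs' => guarded Q /\ guardedB bs'
  end.

Fixpoint wf {p : psi} (P : agent p) : Prop :=
  match P with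
  | Nil => True
  | Out _ _ Q => wf Q
  | Inp _ xs N Q => NoDup xs /\ (forall x, In x xs -> in_supp x N) /\ wf Q
  | Case bs => wfB bs
  | Nu _ Q => wf Q
  | Par Q R => wf Q /\ wf R
  | Bang Q => guarded Q /\ wf Q
  | Ass _ => True
  end
with wfB {p : psi} (bs : branches p) : Prop :=
  match bs with
  | BNil => True
  | BCons _ Q bs' => guarded Q /\ wf Q /\ wfB bs'
  end.

Fixpoint in_branches {p : psi} (phi : C p) (P : agent p) (bs : branches p) : Prop :=
  match bs with
  | BNil => False
  | BCons phi' P' bs' => (phi' = phi /\ P' = P) \/ in_branches phi P bs'
  end.

Inductive substAg {p : psi} (ys : list name) (Ls : list (T p))
  : agent p -> agent p -> Prop :=
| sa_nil : substAg ys Ls Nil Nil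
| sa_out : forall M N P P', substAg ys Ls P P' ->
    substAg ys Ls (Out M N P) (Out (substT M ys Ls) (substT N ys Ls) P')
| sa_inp : forall M xs N P P',
    (forall x, In x xs -> ~ In x ys /\ Forall (fun L => fresh x L) Ls) ->
    substAg ys Ls P P' ->
    substAg ys Ls (Inp M xs N P) (Inp (substT M ys Ls) xs (substT N ys Ls) P')
| sa_case : forall bs bs', substB ys Ls bs bs' -> substAg ys Ls (Case bs) (Case bs')
| sa_nu : forall a P P',
    ~ In a ys -> Forall (fun L => fresh a L) Ls ->
    substAg ys Ls P P' -> substAg ys Ls (Nu a P) (Nu a P')
| sa_par : forall P P' Q Q', substAg ys Ls P P' -> substAg ys Ls Q Q' ->
    substAg ys Ls (Par P Q) (Par P' Q')
| sa_bang : forall P P', substAg ys Ls P P' -> substAg ys Ls (Bang P) (Bang P')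
| sa_ass : forall S, substAg ys Ls (Ass S) (Ass (substA S ys Ls))
| sa_alpha : forall P Q R R', alpha P Q -> substAg ys Ls P R -> alpha R R' ->
    substAg ys Ls Q R'
with substB {p : psi} (ys : list name) (Ls : list (T p))
  : branches p -> branches p -> Prop :=
| sb_nil : substB ys Ls BNil BNil
| sb_cons : forall phi P P' bs bs', substAg ys Ls P P' -> substB ys Ls bs bs' ->
    substB ys Ls (BCons phi P bs) (BCons (substC phi ys Ls) P' bs').

Definition frame_alpha {p : psi} (bs : list name) (S : A p)
    (cs : list name) (S' : A p) : Prop :=
  length bs = length cs /\
  exists L : list name, forall ds, NoDup ds -> length ds = length bs ->
    avoids ds L -> swaps nswap bs ds S = swaps nswap cs ds S'.

(* frameR P bs S  :  F(P) = (nu bs) S  (up to alpha-equivalence). *)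
Inductive frameR {p : psi} : agent p -> list name -> A p -> Prop :=
| fr_nil : frameR Nil [] unit
| fr_out : forall M N P, frameR (Out M N P) [] unit
| fr_inp : forall M xs N P, frameR (Inp M xs N P) [] unit
| fr_case : forall bs, frameR (Case bs) [] unit
| fr_bang : forall P, frameR (Bang P) [] unit
| fr_ass : forall S, frameR (Ass S) [] S
| fr_par : forall P Q b1 S1 b2 S2,
    frameR P b1 S1 -> frameR Q b2 S2 ->
    (forall b, In b b1 -> ~ In b b2 /\ fresh b S2) ->
    (forall b, In b b2 -> ~ In b b1 /\ fresh b S1) ->
    frameR (Par P Q) (b1 ++ b2) (comp S1 S2)
| fr_nu : forall a P bs S, frameR P bs S -> frameR (Nu a P) (a :: bs) S
| fr_alpha : forall P bs S cs S', frameR P bs S -> frame_alpha bs S cs S' ->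
    frameR P cs S'
| fr_agent_alpha : forall P Q bs S, alpha P Q -> frameR P bs S -> frameR Q bs S.

Inductive action (p : psi) : Type :=
| AOut : T p -> list name -> T p -> action p    (* 'M (nu a~) N *)
| AIn : T p -> T p -> action p
| ATau : action p.
Arguments AOut {p}.
Arguments AIn {p}.
Arguments ATau {p}.

Definition subj {p : psi} (al : action p) : option (T p) :=
  match al with
  | AOut M _ _ => Some M
  | AIn M _ => Some M
  | ATau => None
  end.

Definition bn {p : psi} (al : action p) : list name :=
  match al with
  | AOut _ xs _ => xs
  | _ => []
  end.

Definition fresh_act {p : psi} (b : name) (al : action p) : Prop :=
  match al with
  | AOut M _ N => fresh b M /\ fresh b N
  | AIn M N => fresh b M /\ fresh b N
  | ATau => True
  end.

(* alpha-equivalence of (action, derivative) pairs: bn(al) binds into the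
   object and the derivative. *)
Definition tr_alpha {p : psi} (al : action p) (P : agent p)
    (be : action p) (Q : agent p) : Prop :=
  match al, be with
  | ATau, ATau => alpha P Q
  | AIn M N, AIn M' N' => M = M' /\ N = N' /\ alpha P Q
  | AOut M xs N, AOut M' ys N' =>
      M = M' /\ length xs = length ys /\
      exists L : list name, forall ds, NoDup ds -> length ds = length xs ->
        avoids ds L ->
        swaps nswap xs ds N = swaps nswap ys ds N' /\
        alpha (swaps swapA xs ds P) (swaps swapA ys ds Q)
  | _, _ => False
  end.

Definition nus {p : psi} (xs : list name) (P : agent p) : agent p :=
  fold_right Nu P xs.

Definition freshL {p : psi} (bs : list name) (S : A p) : Prop :=
  forall b, In b bs -> fresh b S.

Inductive trans {p : psi} : A p -> agent p -> action p -> agent p -> Prop :=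
| t_in : forall S M K ys N P Ls P',
    entails S (chaneq M K) ->
    length Ls = length ys ->
    substAg ys Ls P P' ->
    trans S (Inp M ys N P) (AIn K (substT N ys Ls)) P'
| t_out : forall S M K N P,
    entails S (chaneq M K) ->
    trans S (Out M N P) (AOut K [] N) P
| t_case : forall S bs phi P al P',
    in_branches phi P bs ->
    trans S P al P' -> entails S phi ->
    trans S (Case bs) al P'
| t_com : forall S P Q bP SP bQ SQ M xs N K P' Q',
    frameR P bP SP -> frameR Q bQ SQ ->
    (forall b, In b bP -> fresh b S /\ ~ In b bQ /\ freshA b Q /\ fresh b M /\ freshA b P) ->
    (forall b, In b bQ -> fresh b S /\ ~ In b bP /\ freshA b P /\ fresh b K /\ freshA b Q) ->
    trans (comp SQ S) P (AOut M xs N) P' ->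
    trans (comp SP S) Q (AIn K N) Q' ->
    entails (comp (comp S SP) SQ) (chaneq M K) ->
    (forall a, In a xs -> freshA a Q) ->
    trans S (Par P Q) ATau (nus xs (Par P' Q'))
| t_com_sym : forall S P Q bP SP bQ SQ M xs N K P' Q',
    frameR P bP SP -> frameR Q bQ SQ ->
    (forall b, In b bQ -> fresh b S /\ ~ In b bP /\ freshA b P /\ fresh b M /\ freshA b Q) ->
    (forall b, In b bP -> fresh b S /\ ~ In b bQ /\ freshA b Q /\ fresh b K /\ freshA b P) ->
    trans (comp SP S) Q (AOut M xs N) Q' ->
    trans (comp SQ S) P (AIn K N) P' ->
    entails (comp (comp S SQ) SP) (chaneq M K) ->
    (forall a, In a xs -> freshA a P) ->
    trans S (Par P Q) ATau (nus xs (Par P' Q'))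
| t_par : forall S P Q bQ SQ al P',
    frameR Q bQ SQ ->
    (forall b, In b bQ -> fresh b S /\ freshA b P /\ fresh_act b al) ->
    trans (comp SQ S) P al P' ->
    (forall a, In a (bn al) -> freshA a Q) ->
    trans S (Par P Q) al (Par P' Q)
| t_par_sym : forall S P Q bP SP al Q',
    frameR P bP SP ->
    (forall b, In b bP -> fresh b S /\ freshA b Q /\ fresh_act b al) ->
    trans (comp SP S) Q al Q' ->
    (forall a, In a (bn al) -> freshA a P) ->
    trans S (Par P Q) al (Par P Q')
| t_scope : forall S P al P' b,
    trans S P al P' -> fresh_act b al -> fresh b S ->
    trans S (Nu b P) al (Nu b P')
| t_open : forall S P M xs1 xs2 N P' b,
    trans S P (AOut M (xs1 ++ xs2) N) P' ->
    ~ In b (xs1 ++ xs2) -> fresh b S -> fresh b M -> in_supp b N ->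
    trans S (Nu b P) (AOut M (xs1 ++ b :: xs2) N) P'
| t_rep : forall S P al P',
    trans S (Par P (Bang P)) al P' -> trans S (Bang P) al P'
| t_alpha : forall S P al P' Q be Q',
    trans S P al P' -> alpha P Q -> tr_alpha al P' be Q' ->
    trans S Q be Q'.

(* Main.v *)
Require Import Defs.
From Stdlib Require Import List Arith Lia.
Import ListNotations.


Ltac sw := unfold swap_name;
  repeat (match goal with |- context [Nat.eqb ?x ?y] => is_var x; is_var y; destruct (Nat.eqb_spec x y) end; subst; simpl);
  try congruence.
Lemma swap_l a b : swap_name a b a = b.
Proof. sw. Qed.
Lemma swap_r a b : swap_name a b b = a.
Proof. sw. Qed.
Lemma swap_o a b c : c <> a -> c <> b -> swap_name a b c = c.
Proof. intros. sw. Qed.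
Lemma swap_inv a b c : swap_name a b (swap_name a b c) = c.
Proof. sw. Qed.
Lemma swap_id a c : swap_name a a c = c.
Proof. sw. Qed.
Lemma swap_conj a b c d e :
  swap_name a b (swap_name c d e) = swap_name (swap_name a b c) (swap_name a b d) (swap_name a b e).
Proof. sw. Qed.
Lemma swap_sym a b c : swap_name a b c = swap_name b a c.
Proof. sw. Qed.
Lemma swap_inj a b c d : swap_name a b c = swap_name a b d -> c = d.
Proof. intro H. rewrite <- (swap_inv a b c), <- (swap_inv a b d), H. auto. Qed.

Lemma in_le_max x l : In x l -> x <= list_max l.
Proof. induction l; simpl; intros H; [contradiction|]. destruct H; subst; [lia|]. specialize (IHl H). lia. Qed.

Lemma nswap_sym (X : nominal) a b (x : X) : nswap a b x = nswap b a x.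
Proof.
  assert (H : nswap a b (nswap a b x) = nswap b a (nswap a b x)).
  { rewrite (nswap_conj X a b a b x). rewrite swap_l, swap_r. auto. }
  rewrite nswap_inv in H.
  rewrite <- (nswap_inv X b a (nswap a b x)). rewrite <- H. reflexivity.
Qed.

Lemma supp_ex (X : nominal) (x : X) : exists L, forall a, ~ In a L -> fresh a x.
Proof. destruct (nfinsupp X x) as [L HL]. exists L. intros a Ha. exists L. intros b Hb. apply HL; auto. Qed.

Lemma fresh_swap_other (X : nominal) a b c (x : X) :
  fresh a x -> a <> b -> a <> c -> fresh a (nswap b c x).
Proof.
  intros [L HL] H1 H2. exists (b :: c :: L). intros d Hd. simpl in Hd.
  rewrite nswap_conj. rewrite !swap_o by (intuition; subst; auto). rewrite HL by tauto. auto.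
Qed.

Lemma fresh_swap_other_inv (X : nominal) a b c (x : X) :
  fresh a (nswap b c x) -> a <> b -> a <> c -> fresh a x.
Proof. intros H H1 H2. rewrite <- (nswap_inv X b c x). apply fresh_swap_other; auto. Qed.

Lemma fresh_swap_self (X : nominal) a b (x : X) : fresh b x -> fresh a (nswap a b x).
Proof.
  intros [L HL]. exists (a :: b :: L). intros d Hd. simpl in Hd.
  assert (E : nswap a b x = nswap a b (nswap b d x)) by (rewrite HL; tauto).
  symmetry. rewrite E at 1. rewrite (nswap_conj X a b b d). rewrite swap_r, (swap_o a b d) by (intuition; subst; auto).
  reflexivity.
Qed.

Lemma fresh_swap_id (X : nominal) a b (x : X) : fresh a x -> fresh b x -> nswap a b x = x.
Proof.
  intros [La HA] [Lb HB].
  destruct (Nat.eq_dec a b) as [->|Hab]; [apply nswap_id|].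
  set (e := S (list_max (a :: b :: La ++ Lb))).
  assert (He : ~ In e (a :: b :: La ++ Lb)).
  { intro Hin. apply in_le_max in Hin. unfold e in Hin; lia. }
  simpl in He. rewrite in_app_iff in He.
  assert (H1 : nswap a e x = x) by (apply HA; tauto).
  assert (H2 : nswap b e x = x) by (apply HB; tauto).
  assert (H3 : nswap a e (nswap b e (nswap a e x)) = nswap b a x).
  { rewrite nswap_conj. rewrite swap_o by (intuition; subst; auto). rewrite swap_r. rewrite nswap_inv. auto. }
  rewrite H1, H2, H1 in H3. rewrite nswap_sym. auto.
Qed.

Lemma fresh_from_swap (X : nominal) x c (y : X) : x <> c -> nswap x c y = y -> fresh c y -> fresh x y.
Proof.
  intros Hxc E [L HL]. exists (x :: c :: L). intros b Hb. simpl in Hb.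
  assert (E2 : nswap c b (nswap x c (nswap c b y)) = nswap x b y).
  { rewrite nswap_conj. rewrite swap_o by (intuition; subst; auto). rewrite swap_l. rewrite nswap_inv. auto. }
  rewrite HL in E2 by tauto. rewrite E in E2. rewrite HL in E2 by tauto. auto.
Qed.

Lemma fresh_list (L : list name) n : exists ds, NoDup ds /\ length ds = n /\ avoids ds L.
Proof.
  exists (seq (S (list_max L)) n). split; [apply seq_NoDup|]. split; [apply length_seq|].
  intros d Hd Hin. apply in_seq in Hd. apply in_le_max in Hin. lia.
Qed.

Lemma swap_rename (X : nominal) a c d (x : X) :
  fresh c x -> fresh d x -> a <> c -> a <> d -> c <> d ->
  nswap a d x = nswap c d (nswap a c x).
Proof.
  intros Hc Hd H1 H2 H3. rewrite nswap_conj. rewrite swap_o by auto. rewrite swap_l.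
  rewrite (fresh_swap_id X c d x) by auto. auto.
Qed.


Fixpoint unswaps {X : Type} (sw : name -> name -> X -> X)
    (xs cs : list name) (x : X) : X :=
  match xs, cs with
  | a :: xs', c :: cs' => unswaps sw xs' cs' (sw a c x)
  | _, _ => x
  end.

Lemma unswaps_swaps (X : nominal) bs ds (x : X) :
  unswaps nswap bs ds (swaps nswap bs ds x) = x.
Proof.
  revert ds x; induction bs as [|b bs IH]; intros [|d ds] x; simpl; auto.
  rewrite nswap_inv. apply IH.
Qed.

Lemma swaps_app (X : nominal) b1 b2 d1 d2 (x : X) : length b1 = length d1 ->
  swaps nswap (b1 ++ b2) (d1 ++ d2) x = swaps nswap b1 d1 (swaps nswap b2 d2 x).
Proof.
  revert d1; induction b1 as [|b b1 IH]; intros [|d d1] H; simpl in *; try discriminate; auto.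
  rewrite IH; auto.
Qed.

Lemma swaps_fresh_id (X : nominal) bs ds (x : X) :
  (forall b, In b bs -> fresh b x) -> (forall d, In d ds -> fresh d x) -> swaps nswap bs ds x = x.
Proof.
  revert ds; induction bs as [|b bs IH]; intros [|d ds] H1 H2; simpl; auto.
  rewrite IH by (intros; simpl in *; auto). apply fresh_swap_id; simpl in *; auto.
Qed.

Lemma unswaps_fresh_id (X : nominal) bs ds (x : X) :
  (forall b, In b bs -> fresh b x) -> (forall d, In d ds -> fresh d x) -> unswaps nswap bs ds x = x.
Proof.
  revert ds x; induction bs as [|b bs IH]; intros [|d ds] x H1 H2; simpl; auto.
  rewrite fresh_swap_id by (simpl in *; auto). apply IH; intros; simpl in *; auto.
Qed.

Lemma swaps_fresh_pres (X : nominal) bs ds (x : X) a :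
  ~ In a bs -> ~ In a ds -> fresh a x -> fresh a (swaps nswap bs ds x).
Proof.
  revert ds; induction bs as [|b bs IH]; intros [|d ds] H1 H2 H3; simpl; auto.
  simpl in *. apply fresh_swap_other; auto.
Qed.

Lemma unswaps_fresh_pres (X : nominal) bs ds (x : X) a :
  ~ In a bs -> ~ In a ds -> fresh a x -> fresh a (unswaps nswap bs ds x).
Proof.
  revert ds x; induction bs as [|b bs IH]; intros [|d ds] x H1 H2 H3; simpl; auto.
  simpl in *. apply IH; auto. apply fresh_swap_other; auto.
Qed.

Lemma swaps_fresh_gen (X : nominal) bs ds (y : X) x :
  fresh x y -> ~ In x ds -> (forall d, In d ds -> fresh d y) -> NoDup ds ->
  fresh x (swaps nswap bs ds y).
Proof.
  revert ds x; induction bs as [|b bs IH]; intros [|d ds] x H1 H2 H3 H4; simpl; auto.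
  inversion H4; subst. simpl in *.
  assert (Hx : fresh x (swaps nswap bs ds y)) by (apply IH; auto).
  assert (Hd : fresh d (swaps nswap bs ds y)) by (apply IH; auto).
  destruct (Nat.eq_dec x b) as [->|Hxb].
  - apply fresh_swap_self; auto.
  - apply fresh_swap_other; auto.
Qed.

Lemma swaps_eqv (X : nominal) a b xs ds (x : X) :
  nswap a b (swaps nswap xs ds x) = swaps nswap (map (swap_name a b) xs) (map (swap_name a b) ds) (nswap a b x).
Proof.
  revert ds; induction xs as [|y xs IH]; intros [|d ds]; simpl; auto.
  rewrite nswap_conj. rewrite IH. auto.
Qed.

Lemma map_swap_id a b (l : list name) : ~ In a l -> ~ In b l -> map (swap_name a b) l = l.
Proof. induction l; simpl; intros; auto. rewrite swap_o by intuition. rewrite IHl; intuition. Qed.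

Lemma fresh_comp (p : psi) a (x y : A p) : fresh a x -> fresh a y -> fresh a (comp x y).
Proof. intros [L1 H1] [L2 H2]. exists (L1 ++ L2). intros b Hb. rewrite in_app_iff in Hb.
  rewrite comp_eqv, H1, H2; tauto. Qed.
Lemma fresh_unit (p : psi) a : fresh a (@unit p).
Proof. exists []. intros. apply unit_eqv. Qed.

Lemma swaps_comp (p : psi) bs ds (x y : A p) :
  swaps nswap bs ds (comp x y) = comp (swaps nswap bs ds x) (swaps nswap bs ds y).
Proof. revert ds; induction bs; intros [|d ds]; simpl; auto. rewrite IHbs, comp_eqv. auto. Qed.
Lemma unswaps_comp (p : psi) bs ds (x y : A p) :
  unswaps nswap bs ds (comp x y) = comp (unswaps nswap bs ds x) (unswaps nswap bs ds y).
Proof. revert ds x y; induction bs; intros [|d ds] x y; simpl; auto. rewrite comp_eqv, IHbs. auto. Qed.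
Lemma swaps_chaneq (p : psi) bs ds (x y : T p) :
  swaps nswap bs ds (chaneq x y) = chaneq (swaps nswap bs ds x) (swaps nswap bs ds y).
Proof. revert ds; induction bs; intros [|d ds]; simpl; auto. rewrite IHbs, chaneq_eqv. auto. Qed.
Lemma unswaps_chaneq (p : psi) bs ds (x y : T p) :
  unswaps nswap bs ds (chaneq x y) = chaneq (unswaps nswap bs ds x) (unswaps nswap bs ds y).
Proof. revert ds x y; induction bs; intros [|d ds] x y; simpl; auto. rewrite chaneq_eqv, IHbs. auto. Qed.
Lemma entails_swaps (p : psi) bs ds (S : A p) phi :
  entails S phi -> entails (swaps nswap bs ds S) (swaps nswap bs ds phi).
Proof. revert ds; induction bs; intros [|d ds] H; simpl; auto. apply entails_eqv. auto. Qed.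
Lemma entails_unswaps (p : psi) bs ds (S : A p) phi :
  entails S phi -> entails (unswaps nswap bs ds S) (unswaps nswap bs ds phi).
Proof. revert ds S phi; induction bs; intros [|d ds] S phi H; simpl; auto. apply IHbs. apply entails_eqv. auto. Qed.

Definition aeq {p : psi} (S S' : A p) := forall phi, entails S phi <-> entails S' phi.
Lemma aeq_refl (p : psi) (S : A p) : aeq S S. Proof. intro; tauto. Qed.
Lemma aeq_sym (p : psi) (S S' : A p) : aeq S S' -> aeq S' S. Proof. intros H phi; specialize (H phi); tauto. Qed.
Lemma aeq_trans (p : psi) (S1 S2 S3 : A p) : aeq S1 S2 -> aeq S2 S3 -> aeq S1 S3.
Proof. intros H1 H2 phi; specialize (H1 phi); specialize (H2 phi); tauto. Qed.
Lemma aeq_comm (p : psi) (S S' : A p) : aeq (comp S S') (comp S' S).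
Proof. intro; apply comp_comm. Qed.
Lemma aeq_assoc (p : psi) (S S' S'' : A p) : aeq (comp (comp S S') S'') (comp S (comp S' S'')).
Proof. intro; apply comp_assoc. Qed.
Lemma aeq_cong_l (p : psi) (S S' S'' : A p) : aeq S S' -> aeq (comp S S'') (comp S' S'').
Proof. intros H phi; apply comp_cong; auto. Qed.
Lemma aeq_cong_r (p : psi) (S S' S'' : A p) : aeq S S' -> aeq (comp S'' S) (comp S'' S').
Proof. intros H. eapply aeq_trans; [apply aeq_comm|]. eapply aeq_trans; [apply aeq_cong_l; eauto|]. apply aeq_comm. Qed.
Lemma aeq_unit (p : psi) (S : A p) : aeq (comp S unit) S.
Proof. intro; apply comp_unit. Qed.
Lemma aeq_swap (p : psi) a b (S S' : A p) : aeq S S' -> aeq (nswap a b S) (nswap a b S').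
Proof. intros H phi. split; intro E.
  - rewrite <- (nswap_inv _ a b phi). apply entails_eqv. apply H. rewrite <- (nswap_inv _ a b S). apply entails_eqv. auto.
  - rewrite <- (nswap_inv _ a b phi). apply entails_eqv. apply H. rewrite <- (nswap_inv _ a b S'). apply entails_eqv. auto.
Qed.


Scheme agent_mut := Induction for agent Sort Prop
  with branches_mut := Induction for branches Sort Prop.

Lemma map_swap_inv a b (l : list name) : map (swap_name a b) (map (swap_name a b) l) = l.
Proof. induction l; simpl; auto. rewrite swap_inv, IHl; auto. Qed.

Lemma swapA_inv (p : psi) a b (P : agent p) : swapA a b (swapA a b P) = P.
Proof.
  induction P using agent_mut with (P0 := fun bs => swapB a b (swapB a b bs) = bs); simpl;
  rewrite ?nswap_inv, ?swap_inv, ?map_swap_inv; try congruence.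
Qed.

Lemma map_swap_conj a b c d (l : list name) :
  map (swap_name a b) (map (swap_name c d) l) =
  map (swap_name (swap_name a b c) (swap_name a b d)) (map (swap_name a b) l).
Proof. induction l; simpl; auto. rewrite swap_conj, IHl. auto. Qed.

Lemma swapA_conj (p : psi) a b c d (P : agent p) :
  swapA a b (swapA c d P) = swapA (swap_name a b c) (swap_name a b d) (swapA a b P).
Proof.
  induction P using agent_mut with (P0 := fun bs =>
    swapB a b (swapB c d bs) = swapB (swap_name a b c) (swap_name a b d) (swapB a b bs)); simpl;
  rewrite ?(nswap_conj _ a b c d), ?(swap_conj a b c d), ?(map_swap_conj a b c d); try congruence.
Qed.

Lemma swaps_swapA_eqv (p : psi) a b xs ds (P : agent p) :
  swapA a b (swaps swapA xs ds P) = swaps swapA (map (swap_name a b) xs) (map (swap_name a b) ds) (swapA a b P).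
Proof.
  revert ds; induction xs as [|y xs IH]; intros [|d ds]; simpl; auto.
  rewrite swapA_conj. rewrite IH. auto.
Qed.

Lemma swaps_swapA_eqv' (p : psi) a b xs ds (P : agent p) : avoids ds [a; b] ->
  swapA a b (swaps swapA xs ds P) = swaps swapA (map (swap_name a b) xs) ds (swapA a b P).
Proof.
  intros H. rewrite swaps_swapA_eqv. rewrite (map_swap_id a b ds); auto;
  intro Hin; apply (H _ Hin); simpl; auto.
Qed.

Lemma swaps_nswap_eqv' (X : nominal) a b xs ds (x : X) : avoids ds [a; b] ->
  nswap a b (swaps nswap xs ds x) = swaps nswap (map (swap_name a b) xs) ds (nswap a b x).
Proof.
  intros H. rewrite swaps_eqv. rewrite (map_swap_id a b ds); auto;
  intro Hin; apply (H _ Hin); simpl; auto.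
Qed.

Lemma agent_supp (p : psi) (P : agent p) :
  exists L, forall a b, ~ In a L -> ~ In b L -> swapA a b P = P.
Proof.
  induction P using agent_mut with (P0 := fun bs =>
    exists L, forall a b, ~ In a L -> ~ In b L -> swapB a b bs = bs).
  - exists []. auto.
  - destruct (nfinsupp _ n) as [L1 H1]. destruct (nfinsupp _ n0) as [L2 H2]. destruct IHP as [L3 H3].
    exists (L1 ++ L2 ++ L3). intros a b Ha Hb. rewrite !in_app_iff in *. simpl. rewrite H1, H2, H3; tauto.
  - destruct (nfinsupp _ n) as [L1 H1]. destruct (nfinsupp _ n0) as [L2 H2]. destruct IHP as [L3 H3].
    exists (L1 ++ L2 ++ L3 ++ l). intros a b Ha Hb. rewrite !in_app_iff in *. simpl.
    rewrite H1, H2, H3, map_swap_id; tauto.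
  - destruct IHP as [L H]. exists L. intros. simpl. rewrite H; auto.
  - destruct IHP as [L H]. exists (n :: L). intros a b Ha Hb. simpl in *. rewrite H, swap_o; intuition.
  - destruct IHP1 as [L1 H1]. destruct IHP2 as [L2 H2]. exists (L1 ++ L2). intros a b Ha Hb.
    rewrite !in_app_iff in *. simpl. rewrite H1, H2; tauto.
  - destruct IHP as [L H]. exists L. intros. simpl. rewrite H; auto.
  - destruct (nfinsupp _ n) as [L1 H1]. exists L1. intros. simpl. rewrite H1; auto.
  - exists []. auto.
  - destruct (nfinsupp _ n) as [L1 H1]. destruct IHP as [L3 H3]. match goal with H : exists L, forall a b, _ -> _ -> swapB a b _ = _ |- _ => destruct H as [L2 H2] end.
    exists (L1 ++ L2 ++ L3). intros a0 b0 Ha Hb. rewrite !in_app_iff in *. simpl. rewrite H1, H2, H3; tauto.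
Qed.


Lemma alpha_ind2 (p : psi) (Pr : agent p -> agent p -> Prop) (PrB : branches p -> branches p -> Prop)
  (h_nil : Pr Nil Nil)
  (h_out : forall M N P P', alpha P P' -> Pr P P' -> Pr (Out M N P) (Out M N P'))
  (h_inp : forall M xs N P ys N' P', length xs = length ys ->
     (exists L : list name, forall ds, NoDup ds -> length ds = length xs -> avoids ds L ->
        swaps nswap xs ds N = swaps nswap ys ds N' /\
        alpha (swaps swapA xs ds P) (swaps swapA ys ds P') /\
        Pr (swaps swapA xs ds P) (swaps swapA ys ds P')) ->
     Pr (Inp M xs N P) (Inp M ys N' P'))
  (h_case : forall bs bs', alphaB bs bs' -> PrB bs bs' -> Pr (Case bs) (Case bs'))
  (h_nu : forall a P b Q, (exists L : list name, forall c, ~ In c L ->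
        alpha (swapA a c P) (swapA b c Q) /\ Pr (swapA a c P) (swapA b c Q)) ->
     Pr (Nu a P) (Nu b Q))
  (h_par : forall P P' Q Q', alpha P P' -> Pr P P' -> alpha Q Q' -> Pr Q Q' -> Pr (Par P Q) (Par P' Q'))
  (h_bang : forall P P', alpha P P' -> Pr P P' -> Pr (Bang P) (Bang P'))
  (h_ass : forall S, Pr (Ass S) (Ass S))
  (hb_nil : PrB BNil BNil)
  (hb_cons : forall phi P P' bs bs', alpha P P' -> Pr P P' -> alphaB bs bs' -> PrB bs bs' ->
     PrB (BCons phi P bs) (BCons phi P' bs')) :
  forall P Q, alpha P Q -> Pr P Q.
Proof.
  fix IH 3 with (IHB (bs bs' : branches p) (H : alphaB bs bs') {struct H} : PrB bs bs').
  - intros P Q H. destruct H.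
    + apply h_nil.
    + apply h_out; auto.
    + apply h_inp; auto. destruct H0 as [L HL]. exists L. intros ds H1 H2 H3.
      destruct (HL ds H1 H2 H3) as [E1 E2]. split; [exact E1|]. split; [exact E2|]. exact (IH _ _ E2).
    + apply h_case; auto.
    + apply h_nu. destruct H as [L HL]. exists L. intros c Hc. split; [exact (HL c Hc)|]. exact (IH _ _ (HL c Hc)).
    + apply h_par; auto.
    + apply h_bang; auto.
    + apply h_ass.
  - intros bs bs' H. destruct H.
    + apply hb_nil.
    + apply hb_cons; auto.
Qed.


Definition permA {p : psi} (pi : list (name * name)) (P : agent p) : agent p :=
  fold_right (fun ab Q => swapA (fst ab) (snd ab) Q) P pi.
Definition permB {p : psi} (pi : list (name * name)) (bs : branches p) : branches p :=
  fold_right (fun ab Q => swapB (fst ab) (snd ab) Q) bs pi.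
Definition permX {X : nominal} (pi : list (name * name)) (x : X) : X :=
  fold_right (fun ab Q => nswap (fst ab) (snd ab) Q) x pi.
Definition permN (pi : list (name * name)) (x : name) : name :=
  fold_right (fun ab Q => swap_name (fst ab) (snd ab) Q) x pi.

Lemma permA_Nil (p : psi) pi : permA pi (@Nil p) = Nil.
Proof. induction pi; simpl; auto. rewrite IHpi. auto. Qed.
Lemma permA_Out (p : psi) pi M N (P : agent p) : permA pi (Out M N P) = Out (permX pi M) (permX pi N) (permA pi P).
Proof. induction pi; simpl; auto. rewrite IHpi. auto. Qed.
Lemma permA_Inp (p : psi) pi M xs N (P : agent p) :
  permA pi (Inp M xs N P) = Inp (permX pi M) (map (permN pi) xs) (permX pi N) (permA pi P).
Proof. induction pi; simpl; auto. rewrite map_id; auto. rewrite IHpi. simpl. rewrite map_map. auto. Qed.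
Lemma permA_Case (p : psi) pi (bs : branches p) : permA pi (Case bs) = Case (permB pi bs).
Proof. induction pi; simpl; auto. rewrite IHpi. auto. Qed.
Lemma permA_Nu (p : psi) pi a (P : agent p) : permA pi (Nu a P) = Nu (permN pi a) (permA pi P).
Proof. induction pi; simpl; auto. rewrite IHpi. auto. Qed.
Lemma permA_Par (p : psi) pi (P Q : agent p) : permA pi (Par P Q) = Par (permA pi P) (permA pi Q).
Proof. induction pi; simpl; auto. rewrite IHpi. auto. Qed.
Lemma permA_Bang (p : psi) pi (P : agent p) : permA pi (Bang P) = Bang (permA pi P).
Proof. induction pi; simpl; auto. rewrite IHpi. auto. Qed.
Lemma permA_Ass (p : psi) pi (S : A p) : permA pi (Ass S) = Ass (permX pi S).
Proof. induction pi; simpl; auto. rewrite IHpi. auto. Qed.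
Lemma permB_nil (p : psi) pi : permB pi (@BNil p) = BNil.
Proof. induction pi; simpl; auto. rewrite IHpi. auto. Qed.
Lemma permB_cons (p : psi) pi phi (P : agent p) bs :
  permB pi (BCons phi P bs) = BCons (permX pi phi) (permA pi P) (permB pi bs).
Proof. induction pi; simpl; auto. rewrite IHpi. auto. Qed.

Lemma swaps_permA (p : psi) xs ds pi (P : agent p) :
  swaps swapA xs ds (permA pi P) = permA (combine xs ds ++ pi) P.
Proof. revert ds; induction xs; intros [|d ds]; simpl; auto. rewrite IHxs. auto. Qed.

Lemma alpha_refl_perm (p : psi) (P : agent p) : forall pi, alpha (permA pi P) (permA pi P).
Proof.
  induction P using agent_mut with (P0 := fun bs => forall pi, alphaB (permB pi bs) (permB pi bs)); intros pi.
  - rewrite permA_Nil. constructor.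
  - rewrite permA_Out. constructor. auto.
  - rewrite permA_Inp. constructor; auto. exists []. intros ds _ _ _. split; auto.
    rewrite swaps_permA. auto.
  - rewrite permA_Case. constructor. auto.
  - rewrite permA_Nu. constructor. exists []. intros c _.
    specialize (IHP ((permN pi n, c) :: pi)). simpl in IHP. auto.
  - rewrite permA_Par. constructor; auto.
  - rewrite permA_Bang. constructor; auto.
  - rewrite permA_Ass. constructor.
  - rewrite permB_nil. constructor.
  - rewrite permB_cons. constructor; auto.
Qed.

Lemma alpha_refl (p : psi) (P : agent p) : alpha P P.
Proof. apply (alpha_refl_perm p P []). Qed.

Lemma alpha_sym (p : psi) (P Q : agent p) : alpha P Q -> alpha Q P.
Proof.
  apply (alpha_ind2 p (fun P Q => alpha Q P) (fun bs bs' => alphaB bs' bs)); intros.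
  - constructor.
  - apply al_out; assumption.
  - apply al_inp; [congruence|]. destruct H0 as [L HL]. exists L. intros ds H1 H2 H3.
    rewrite <- H in H2. destruct (HL ds H1 H2 H3) as [E1 [E2 E3]]. auto.
  - apply al_case; assumption.
  - apply al_nu. destruct H as [L HL]. exists L. intros c Hc. apply HL; auto.
  - apply al_par; assumption.
  - apply al_bang; assumption.
  - apply al_ass.
  - apply alB_nil.
  - apply alB_cons; assumption.
Qed.

Lemma alpha_eqv (p : psi) (P Q : agent p) : alpha P Q -> forall x y, alpha (swapA x y P) (swapA x y Q).
Proof.
  apply (alpha_ind2 p (fun P Q => forall x y, alpha (swapA x y P) (swapA x y Q))
                      (fun bs bs' => forall x y, alphaB (swapB x y bs) (swapB x y bs'))).
  - constructor.
  - intros; simpl; apply al_out; auto.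
  - intros M xs N P0 ys N' P0' Hlen [L HL] x y; simpl.
    apply al_inp; [rewrite !length_map; auto|]. exists (x :: y :: L).
    intros ds H1 H2 H3. rewrite length_map in H2.
    assert (Hav : avoids ds L) by (intros d Hd Hin; apply (H3 d Hd); simpl; auto).
    assert (Hxy : avoids ds [x; y]) by (intros d Hd Hin; apply (H3 d Hd); simpl in *; intuition).
    destruct (HL ds H1 H2 Hav) as [E1 [E2 E3]].
    rewrite <- (swaps_nswap_eqv' _ x y xs ds N Hxy), <- (swaps_nswap_eqv' _ x y ys ds N' Hxy).
    rewrite <- (swaps_swapA_eqv' p x y xs ds P0 Hxy), <- (swaps_swapA_eqv' p x y ys ds P0' Hxy).
    rewrite E1. split; [reflexivity| apply E3].
  - intros bs bs2 Hb IHb x y; simpl. apply al_case. apply IHb.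
  - intros a P0 b Q0 [L HL] x y; simpl. apply al_nu. exists (x :: y :: L). intros c Hc. simpl in Hc.
    destruct (HL c ltac:(tauto)) as [_ H2]. specialize (H2 x y).
    rewrite (swapA_conj p x y a c P0), (swapA_conj p x y b c Q0) in H2. rewrite (swap_o x y c) in H2 by (intro; subst; tauto). exact H2.
  - intros; simpl; apply al_par; auto.
  - intros; simpl; apply al_bang; auto.
  - intros; simpl; apply al_ass.
  - intros; simpl; apply alB_nil.
  - intros; simpl; apply alB_cons; auto.
Qed.

Lemma alpha_trans (p : psi) (P Q : agent p) : alpha P Q -> forall R, alpha Q R -> alpha P R.
Proof.
  apply (alpha_ind2 p (fun P Q => forall R, alpha Q R -> alpha P R)
                      (fun bs bs' => forall bs'', alphaB bs' bs'' -> alphaB bs bs'')).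
  - intros R H; exact H.
  - intros M N P0 P1 _ IH R H. inversion H; subst. apply al_out. apply IH. assumption.
  - intros M xs N P0 ys N' P0' Hlen [L1 H1'] R H. inversion H; subst.
    match goal with H : exists L, _ |- _ => destruct H as [L2 H2'] end.
    apply al_inp; [congruence|].
    exists (L1 ++ L2). intros ds Hn Hl Ha.
    assert (A1 : avoids ds L1) by (intros d Hd Hin; apply (Ha d Hd); apply in_app_iff; auto).
    assert (A2 : avoids ds L2) by (intros d Hd Hin; apply (Ha d Hd); apply in_app_iff; auto).
    destruct (H1' ds Hn Hl A1) as [E1 [E2 E3]].
    destruct (H2' ds Hn ltac:(congruence) A2) as [F1 F2].
    split; [congruence|]. apply E3. exact F2.
  - intros bs bs1 _ IH R H. inversion H; subst. apply al_case. apply IH. assumption.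
  - intros a P0 b Q0 [L1 H1'] R H. inversion H; subst. apply al_nu.
    match goal with H : exists L, _ |- _ => destruct H as [L2 H2'] end.
    exists (L1 ++ L2). intros c Hc. rewrite in_app_iff in Hc.
    destruct (H1' c ltac:(tauto)) as [_ E]. apply E. apply H2'. tauto.
  - intros P0 P1 Q0 Q1 _ IH1 _ IH2 R H. inversion H; subst. apply al_par; auto.
  - intros P0 P1 _ IH R H. inversion H; subst. apply al_bang; auto.
  - intros S0 R H. exact H.
  - intros bs H. exact H.
  - intros phi P0 P1 bs bs1 _ IH1 _ IH2 R H. inversion H; subst. apply alB_cons; auto.
Qed.


Lemma fresh_name (L : list name) : exists e, ~ In e L.
Proof. exists (S (list_max L)). intro H. apply in_le_max in H. lia. Qed.

Lemma freshA_supp (p : psi) (P : agent p) : exists L, forall a, ~ In a L -> freshA a P.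
Proof.
  destruct (agent_supp p P) as [L HL]. exists L. intros a Ha. exists L. intros b Hb.
  rewrite HL by auto. apply alpha_refl.
Qed.

Lemma freshA_inp (p : psi) x M xs N (P : agent p) : freshA x (Inp M xs N P) -> fresh x M.
Proof. intros [L HL]. exists L. intros b Hb. specialize (HL b Hb). simpl in HL; inversion HL; try assumption; congruence. Qed.

Lemma freshA_out (p : psi) x M N (P : agent p) : freshA x (Out M N P) -> fresh x M.
Proof. intros [L HL]. exists L. intros b Hb. specialize (HL b Hb). simpl in HL; inversion HL; try assumption; congruence. Qed.

Lemma freshA_par (p : psi) x (P Q : agent p) : freshA x (Par P Q) -> freshA x P /\ freshA x Q.
Proof. intros [L HL]. split; exists L; intros b Hb; specialize (HL b Hb); simpl in HL; inversion HL; try assumption; congruence. Qed.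

Lemma freshA_par_intro (p : psi) x (P Q : agent p) : freshA x P -> freshA x Q -> freshA x (Par P Q).
Proof. intros [L1 H1] [L2 H2]. exists (L1 ++ L2). intros b Hb. rewrite in_app_iff in Hb. simpl.
  apply al_par; [apply H1|apply H2]; tauto. Qed.

Lemma freshA_bang (p : psi) x (P : agent p) : freshA x (Bang P) -> freshA x P.
Proof. intros [L HL]. exists L; intros b Hb; specialize (HL b Hb); simpl in HL; inversion HL; try assumption; congruence. Qed.

Lemma alphaB_branch (p : psi) x b (bs : branches p) phi P :
  alphaB (swapB x b bs) bs -> in_branches phi P bs -> alpha (swapA x b P) P.
Proof.
  induction bs as [|phi' P' bs IH]; simpl; intros H Hin; [contradiction|].
  inversion H; subst. destruct Hin as [[-> ->]|Hin]; auto.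
Qed.

Lemma freshA_case (p : psi) x (bs : branches p) phi P : freshA x (Case bs) -> in_branches phi P bs -> freshA x P.
Proof. intros [L HL] Hin. exists L; intros b Hb; specialize (HL b Hb); simpl in HL; inversion HL; subst.
  eapply alphaB_branch; eauto. Qed.

Lemma freshA_nu (p : psi) x b (P : agent p) : freshA x (Nu b P) -> x <> b -> freshA x P.
Proof.
  intros [L HL] Hxb. exists (b :: L). intros c Hc. simpl in Hc.
  specialize (HL c ltac:(tauto)). simpl in HL. rewrite swap_o in HL by (intro; subst; tauto).
  inversion HL; subst. match goal with H : exists L, _ |- _ => destruct H as [L' H'] end.
  destruct (fresh_name L') as [e He]. specialize (H' e He).
  pose proof (alpha_eqv p _ _ H' b e) as H''. rewrite !swapA_inv in H''. exact H''.
Qed.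

Lemma freshA_alpha (p : psi) x (P Q : agent p) : alpha P Q -> freshA x Q -> freshA x P.
Proof.
  intros H [L HL]. exists L. intros c Hc.
  eapply alpha_trans; [apply alpha_eqv; exact H|].
  eapply alpha_trans; [apply HL; exact Hc|]. apply alpha_sym; exact H.
Qed.


Fixpoint nb {p : psi} (P : agent p) : nat :=
  match P with Nu _ Q => S (nb Q) | Par Q R => nb Q + nb R | _ => 0 end.

Fixpoint openF {p : psi} (P : agent p) (ds : list name) : A p :=
  match P with
  | Nu a Q => match ds with d :: ds' => nswap a d (openF Q ds') | [] => openF Q [] end
  | Par Q R => comp (openF Q (firstn (nb Q) ds)) (openF R (skipn (nb Q) ds))
  | Ass s0 => s0
  | _ => unit
  end.

Fixpoint ft {p : psi} (P : agent p) : Prop :=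
  match P with Nu _ Q => ft Q | Par Q R => ft Q /\ ft R | Ass _ => False | _ => True end.

Fixpoint wg {p : psi} (P : agent p) : Prop :=
  match P with
  | Case bs => wgB bs
  | Nu _ Q => wg Q
  | Par Q R => wg Q /\ wg R
  | Bang Q => ft Q /\ wg Q
  | _ => True
  end
with wgB {p : psi} (bs : branches p) : Prop :=
  match bs with BNil => True | BCons _ Q bs' => (ft Q /\ wg Q) /\ wgB bs' end.

Lemma in_firstn {X : Type} n (l : list X) x : In x (firstn n l) -> In x l.
Proof. intro H. rewrite <- (firstn_skipn n l). apply in_app_iff. auto. Qed.
Lemma in_skipn {X : Type} n (l : list X) x : In x (skipn n l) -> In x l.
Proof. intro H. rewrite <- (firstn_skipn n l). apply in_app_iff. auto. Qed.

Lemma avoids_app_l ds L1 L2 : avoids ds (L1 ++ L2) -> avoids ds L1.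
Proof. intros H d Hd Hin. apply (H d Hd). apply in_app_iff; auto. Qed.
Lemma avoids_app_r ds L1 L2 : avoids ds (L1 ++ L2) -> avoids ds L2.
Proof. intros H d Hd Hin. apply (H d Hd). apply in_app_iff; auto. Qed.
Lemma avoids_cons ds a L : avoids ds (a :: L) -> avoids ds L /\ ~ In a ds.
Proof. intros H. split. intros d Hd Hin. apply (H d Hd). simpl; auto. intro Hin. apply (H a Hin). simpl; auto. Qed.

Lemma nb_swap (p : psi) x y (P : agent p) : nb (swapA x y P) = nb P.
Proof. induction P; simpl; auto. Qed.

Lemma openF_eqv (p : psi) x y (P : agent p) : forall ds,
  nswap x y (openF P ds) = openF (swapA x y P) (map (swap_name x y) ds).
Proof.
  induction P; intros ds; simpl; try apply unit_eqv; auto.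
  - destruct ds as [|d ds]; simpl; auto. rewrite nswap_conj. rewrite IHP. auto.
  - rewrite comp_eqv, IHP1, IHP2, nb_swap, firstn_map, skipn_map. auto.
Qed.

Lemma openF_eqv' (p : psi) x y (P : agent p) ds : avoids ds [x; y] ->
  nswap x y (openF P ds) = openF (swapA x y P) ds.
Proof. intros H. rewrite openF_eqv, map_swap_id; auto; intro Hin; apply (H _ Hin); simpl; auto. Qed.

Lemma openF_supp (p : psi) (P : agent p) :
  exists L, forall x ds, ~ In x L -> ~ In x ds -> fresh x (openF P ds).
Proof.
  induction P; simpl; try (exists []; intros; apply fresh_unit).
  - destruct IHP as [L HL]. exists (n :: L). intros x [|d ds] H1 H2; simpl in *.
    + apply HL; auto.
    + apply fresh_swap_other; auto.
  - destruct IHP1 as [L1 H1]. destruct IHP2 as [L2 H2]. exists (L1 ++ L2). intros x ds Hx Hd.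
    rewrite in_app_iff in Hx. apply fresh_comp; [apply H1|apply H2]; try tauto;
    intro Hin; apply Hd; [eapply in_firstn|eapply in_skipn]; eauto.
  - destruct (supp_ex _ n) as [L HL]. exists L. intros. auto.
Qed.

Lemma ft_openF (p : psi) (P : agent p) : ft P -> forall ds, aeq (openF P ds) unit.
Proof.
  induction P; simpl; intros Hft ds; try apply aeq_refl; try contradiction.
  - destruct ds as [|d ds]; auto. eapply aeq_trans; [apply aeq_swap; apply IHP; auto|].
    rewrite unit_eqv. apply aeq_refl.
  - destruct Hft as [H1 H2]. eapply aeq_trans; [apply aeq_cong_l; apply IHP1; auto|].
    eapply aeq_trans; [apply aeq_comm|]. eapply aeq_trans; [apply aeq_unit|]. apply IHP2; auto.
Qed.

Lemma guarded_ft (p : psi) (P : agent p) : guarded P -> ft P.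
Proof. induction P; simpl; tauto. Qed.

Lemma wf_wg (p : psi) (P : agent p) : wf P -> wg P.
Proof.
  induction P using agent_mut with (P0 := fun bs => wfB bs -> wgB bs); simpl; try tauto.
  - intros [H1 H2]. split; auto. apply guarded_ft; auto.
  - intros [H1 [H2 H3]]. split; auto. split; auto. apply guarded_ft; auto.
Qed.

Lemma ft_swap (p : psi) x y (P : agent p) : ft (swapA x y P) <-> ft P.
Proof. induction P; simpl; tauto. Qed.

Lemma wg_swap (p : psi) x y (P : agent p) : wg (swapA x y P) <-> wg P.
Proof.
  induction P using agent_mut with (P0 := fun bs => wgB (swapB x y bs) <-> wgB bs); simpl; try tauto.
  - rewrite ft_swap. tauto.
  - rewrite ft_swap. tauto.
Qed.

Lemma alpha_wg (p : psi) (P Q : agent p) : alpha P Q -> (wg P -> wg Q) /\ (ft P -> ft Q).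
Proof.
  apply (alpha_ind2 p (fun P Q => (wg P -> wg Q) /\ (ft P -> ft Q)) (fun bs bs' => wgB bs -> wgB bs')); simpl; try tauto.
  - intros a P0 b Q0 [L HL]. destruct (fresh_name L) as [c Hc]. destruct (HL c Hc) as [_ [H1 H2]].
    rewrite !wg_swap, !ft_swap in *. tauto.
Qed.

Lemma OA (p : psi) (P Q : agent p) : alpha P Q ->
  nb P = nb Q /\ exists L, forall ds, NoDup ds -> length ds = nb P -> avoids ds L -> openF P ds = openF Q ds.
Proof.
  apply (alpha_ind2 p (fun P Q => nb P = nb Q /\ exists L, forall ds, NoDup ds -> length ds = nb P -> avoids ds L -> openF P ds = openF Q ds)
           (fun _ _ => True)); simpl; auto; try (split; auto; exists []; auto; fail).
  - intros a P0 b Q0 [L0 HL0].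
    destruct (openF_supp p P0) as [LP HP]. destruct (openF_supp p Q0) as [LQ HQ].
    destruct (fresh_name (a :: b :: L0 ++ LP ++ LQ)) as [c Hc]. simpl in Hc. rewrite !in_app_iff in Hc.
    destruct (HL0 c ltac:(tauto)) as [_ [Hnb [Lc HLc]]]. rewrite !nb_swap in Hnb.
    split; [congruence|]. exists (c :: a :: b :: Lc ++ LP ++ LQ).
    intros [|d ds] Hnd Hl Hav; [discriminate|]. simpl in Hl. injection Hl as Hl.
    inversion Hnd; subst.
    assert (Hd : ~ In d (c :: a :: b :: Lc ++ LP ++ LQ)) by (apply Hav; simpl; auto).
    assert (Hav' : avoids ds (c :: a :: b :: Lc ++ LP ++ LQ)) by (intros e He; apply Hav; simpl; auto).
    simpl in Hd. rewrite !in_app_iff in Hd.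
    assert (Hc_ds : ~ In c ds) by (intro Hin; apply (Hav' c Hin); simpl; auto).
    assert (Ha_ds : ~ In a ds) by (intro Hin; apply (Hav' a Hin); simpl; auto).
    assert (Hb_ds : ~ In b ds) by (intro Hin; apply (Hav' b Hin); simpl; auto).
    assert (E : openF (swapA a c P0) ds = openF (swapA b c Q0) ds).
    { apply HLc; auto. rewrite nb_swap; auto. intros e He Hin; apply (Hav' e He); simpl; rewrite !in_app_iff; auto. }
    rewrite <- !openF_eqv' in E by (intros e He Hin; simpl in Hin; intuition congruence).
    rewrite (swap_rename _ a c d (openF P0 ds)); try (intro; subst; tauto);
      [|apply HP; tauto|apply HP; tauto].
    rewrite (swap_rename _ b c d (openF Q0 ds)); try (intro; subst; tauto);
      [|apply HQ; tauto|apply HQ; tauto].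
    rewrite E. auto.
  - intros P0 P1 Q0 Q1 _ [Hn1 [L1 H1]] _ [Hn2 [L2 H2]]. split; [congruence|].
    exists (L1 ++ L2). intros ds Hnd Hl Hav. rewrite <- Hn1.
    rewrite H1, H2; auto.
    + apply NoDup_app_remove_l with (l := firstn (nb P0) ds). rewrite firstn_skipn. auto.
    + rewrite length_skipn. lia.
    + intros e He. apply (avoids_app_r _ _ _ Hav). eapply in_skipn; eauto.
    + apply NoDup_app_remove_r with (l' := skipn (nb P0) ds). rewrite firstn_skipn. auto.
    + rewrite length_firstn. lia.
    + intros e He. apply (avoids_app_l _ _ _ Hav). eapply in_firstn; eauto.
Qed.


Lemma nodup_app_disj {X : Type} (l1 l2 : list X) x : NoDup (l1 ++ l2) -> In x l1 -> ~ In x l2.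
Proof.
  induction l1; simpl; intros H Hin; [contradiction|]. inversion H; subst.
  destruct Hin as [->|Hin]; auto. intro H'. apply H2. apply in_app_iff; auto.
Qed.

Lemma OF_sem (p : psi) x (P : agent p) : freshA x P ->
  exists L, forall ds, NoDup ds -> length ds = nb P -> avoids ds L -> ~ In x ds -> fresh x (openF P ds).
Proof.
  intros [Lx HLx]. destruct (openF_supp p P) as [LP HP].
  destruct (fresh_name (x :: Lx ++ LP)) as [c Hc]. simpl in Hc. rewrite in_app_iff in Hc.
  destruct (OA p _ _ (HLx c ltac:(tauto))) as [Hnb [L1 H1]]. rewrite nb_swap in Hnb.
  exists (x :: c :: L1). intros ds Hnd Hl Hav Hx.
  assert (Hc_ds : ~ In c ds) by (intro Hin; apply (Hav c Hin); simpl; auto).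
  assert (E : openF (swapA x c P) ds = openF P ds).
  { apply H1; auto. rewrite nb_swap. auto. intros e He Hin. apply (Hav e He). simpl; auto. }
  rewrite <- openF_eqv' in E by (intros e He Hin; simpl in Hin; intuition congruence).
  apply (fresh_from_swap _ x c); [intro; subst; tauto| exact E | apply HP; tauto].
Qed.

Lemma OF_sem_list (p : psi) (P : agent p) l : (forall x, In x l -> freshA x P) ->
  exists L, forall x ds, In x l -> NoDup ds -> length ds = nb P -> avoids ds L -> ~ In x ds -> fresh x (openF P ds).
Proof.
  induction l as [|y l IH]; intros H.
  - exists []. intros x ds [].
  - destruct (OF_sem p y P (H y (or_introl eq_refl))) as [L1 H1].
    destruct IH as [L2 H2]. intros; apply H; simpl; auto.
    exists (L1 ++ L2). intros x ds [<-|Hin] Hnd Hl Hav Hx.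
    + apply H1; auto. eapply avoids_app_l; eauto.
    + apply H2; auto. eapply avoids_app_r; eauto.
Qed.

Lemma frame_K (p : psi) (P : agent p) bs S : frameR P bs S ->
  length bs = nb P /\ exists L, forall ds, NoDup ds -> length ds = nb P -> avoids ds L ->
     swaps nswap bs ds S = openF P ds.
Proof.
  induction 1; simpl; try (split; auto; exists []; intros [|d ds]; simpl; auto; discriminate).
  - destruct IHframeR1 as [Hl1 [L1 H1']]. destruct IHframeR2 as [Hl2 [L2 H2']].
    destruct (supp_ex _ S1) as [LS1 HS1]. destruct (supp_ex _ S2) as [LS2 HS2].
    rewrite length_app. split; [lia|].
    exists (L1 ++ L2 ++ b1 ++ b2 ++ LS1 ++ LS2). intros ds Hnd Hl Hav.
    assert (Hav1 := avoids_app_l _ _ _ Hav). assert (Hav2 := avoids_app_r _ _ _ Hav).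
    assert (Hav3 := avoids_app_r _ _ _ Hav2). assert (Hav4 := avoids_app_r _ _ _ Hav3).
    assert (Hav5 := avoids_app_r _ _ _ Hav4). assert (Hav6 := avoids_app_r _ _ _ Hav5).
    apply avoids_app_l in Hav2. apply avoids_app_l in Hav3. apply avoids_app_l in Hav4.
    apply avoids_app_l in Hav5.
    set (ds1 := firstn (nb P) ds). set (ds2 := skipn (nb P) ds).
    assert (Hds : ds = ds1 ++ ds2) by (symmetry; apply firstn_skipn).
    assert (Hnd' : NoDup (ds1 ++ ds2)) by (rewrite <- Hds; auto).
    assert (Hnd1 : NoDup ds1) by (eapply NoDup_app_remove_r; eauto).
    assert (Hnd2 : NoDup ds2) by (eapply NoDup_app_remove_l; eauto).
    assert (Hin1 : forall e, In e ds1 -> In e ds) by (intros; eapply in_firstn; eauto).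
    assert (Hin2 : forall e, In e ds2 -> In e ds) by (intros; eapply in_skipn; eauto).
    assert (Hlen1 : length ds1 = nb P) by (unfold ds1; rewrite length_firstn; lia).
    assert (Hlen2 : length ds2 = nb Q) by (unfold ds2; rewrite length_skipn; lia).
    rewrite Hds at 1. rewrite swaps_app by congruence. rewrite !swaps_comp.
    assert (E1 : swaps nswap b2 ds2 S1 = S1).
    { apply swaps_fresh_id. intros b Hb. apply H2; auto.
      intros d Hd. apply HS1. exact (Hav5 d (Hin2 d Hd)). }
    rewrite E1. rewrite H1' by (auto; intros e He; apply Hav1; auto).
    assert (E2 : swaps nswap b1 ds1 (swaps nswap b2 ds2 S2) = swaps nswap b2 ds2 S2).
    { apply swaps_fresh_id.
      - intros b Hb. apply swaps_fresh_gen.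
        + apply H1; auto.
        + intro Hin. apply (Hav3 b (Hin2 b Hin)). auto.
        + intros d Hd. apply HS2. exact (Hav6 d (Hin2 d Hd)).
        + auto.
      - intros d Hd. apply swaps_fresh_gen.
        + apply HS2. exact (Hav6 d (Hin1 d Hd)).
        + eapply nodup_app_disj; eauto.
        + intros d' Hd'. apply HS2. exact (Hav6 d' (Hin2 d' Hd')).
        + auto. }
    rewrite E2. rewrite H2' by (auto; intros e He; apply Hav2; auto). reflexivity.
  - destruct IHframeR as [Hl [L HL]]. split; [lia|]. exists (a :: L).
    intros [|d ds] Hnd Hlen Hav; simpl in Hlen; [discriminate|]. injection Hlen as Hlen.
    inversion Hnd; subst. simpl. rewrite HL; auto. intros e He Hin. apply (Hav e (or_intror He)). simpl; auto.
  - destruct IHframeR as [Hl [L HL]]. destruct H0 as [Hl' [L' HL']].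
    split; [lia|]. exists (L ++ L'). intros ds Hnd Hlen Hav.
    rewrite <- HL'; auto; [|lia|eapply avoids_app_r; eauto]. apply HL; auto. eapply avoids_app_l; eauto.
  - destruct IHframeR as [Hl [L HL]]. destruct (OA p _ _ H) as [Hn [L' HL']].
    split; [lia|]. exists (L ++ L'). intros ds Hnd Hlen Hav.
    rewrite HL; auto; [|lia|eapply avoids_app_l; eauto]. apply HL'; auto; [lia|]. eapply avoids_app_r; eauto.
Qed.


Lemma aeq_ent (p : psi) (X Y : A p) phi : aeq X Y -> entails X phi -> entails Y phi.
Proof. intros H E. apply H. auto. Qed.

Lemma fresh_act_subj (p : psi) b (al : action p) K : fresh_act b al -> subj al = Some K -> fresh b K.
Proof. destruct al; simpl; intros H E; try discriminate; injection E as <-; tauto. Qed.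

Lemma wgB_in (p : psi) (bs : branches p) phi P : wgB bs -> in_branches phi P bs -> ft P /\ wg P.
Proof. induction bs; simpl; intros H Hin; [contradiction|]. destruct Hin as [[-> ->]|Hin]; tauto. Qed.

Lemma tr_alpha_subj (p : psi) (al : action p) P' be Q' : tr_alpha al P' be Q' ->
  subj al = subj be /\ (al = ATau -> be = ATau).
Proof. destruct al, be; simpl; intros H; try contradiction; intuition congruence. Qed.

Lemma nodup_split (ds : list name) n : NoDup ds ->
  NoDup (firstn n ds) /\ NoDup (skipn n ds) /\ (forall e, In e (firstn n ds) -> ~ In e (skipn n ds)).
Proof.
  intros H. rewrite <- (firstn_skipn n ds) in H. split; [eapply NoDup_app_remove_r; eauto|].
  split; [eapply NoDup_app_remove_l; eauto|]. intros e He. eapply nodup_app_disj; eauto.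
Qed.

Lemma main (p : psi) (S : A p) P al P' : trans S P al P' -> al <> ATau -> forall K, subj al = Some K -> wg P ->
  exists L, forall ds B, NoDup ds -> length ds = nb P -> avoids ds L -> avoids ds B ->
   (forall b, In b B -> freshA b P) ->
   exists M, (forall b, In b B -> fresh b M) /\ entails (comp S (openF P ds)) (chaneq M K).
Proof.
  induction 1; intros Hal K0 HK Hwg.
  -
    simpl in HK. injection HK as <-. exists []. intros ds B _ _ _ _ HB. exists M. split.
    + intros b Hb. eapply freshA_inp. apply HB; eauto.
    + simpl. apply comp_unit. auto.
  -
    simpl in HK. injection HK as <-. exists []. intros ds B _ _ _ _ HB. exists M. split.
    + intros b Hb. eapply freshA_out. apply HB; eauto.
    + simpl. apply comp_unit. auto.
  -
    simpl in Hwg. destruct (wgB_in p bs phi P Hwg H) as [Hft HwgP].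
    destruct (IHtrans Hal K0 HK HwgP) as [L0 HL0].
    exists []. intros ds B _ _ _ _ HB.
    destruct (fresh_list (L0 ++ B) (nb P)) as [ds0 [Hnd0 [Hl0 Hav0]]].
    destruct (HL0 ds0 B Hnd0 Hl0 (avoids_app_l _ _ _ Hav0) (avoids_app_r _ _ _ Hav0)) as [M [HM HE]].
    { intros b Hb. eapply freshA_case; eauto. }
    exists M. split; auto. simpl. eapply aeq_ent; [|exact HE]. apply aeq_cong_r. apply ft_openF. auto.
  - contradiction.
  - contradiction.
  -
    simpl in Hwg. destruct Hwg as [HwgP HwgQ].
    destruct (IHtrans Hal K0 HK HwgP) as [L0 HL0].
    destruct (frame_K p Q bQ SQ H) as [HlQ [LQ HLQ]].
    destruct (OF_sem_list p P bQ) as [LF HLF]. { intros x Hx. apply H0; auto. }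
    destruct (supp_ex _ S) as [LS HS]. destruct (supp_ex _ K0) as [LK HK0].
    destruct (freshA_supp p P) as [LP HP]. destruct (openF_supp p P) as [LO HO].
    exists (L0 ++ LQ ++ bQ ++ LF ++ LS ++ LK ++ LP ++ LO).
    intros ds B Hnd Hl Hav HavB HB.
    assert (Hav0 := avoids_app_l _ _ _ Hav). apply avoids_app_r in Hav.
    assert (HavQ := avoids_app_l _ _ _ Hav). apply avoids_app_r in Hav.
    assert (HavbQ := avoids_app_l _ _ _ Hav). apply avoids_app_r in Hav.
    assert (HavF := avoids_app_l _ _ _ Hav). apply avoids_app_r in Hav.
    assert (HavS := avoids_app_l _ _ _ Hav). apply avoids_app_r in Hav.
    assert (HavK := avoids_app_l _ _ _ Hav). apply avoids_app_r in Hav.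
    assert (HavP := avoids_app_l _ _ _ Hav). apply avoids_app_r in Hav.
    rename Hav into HavO.
    simpl in Hl.
    set (ds1 := firstn (nb P) ds). set (ds2 := skipn (nb P) ds).
    destruct (nodup_split ds (nb P) Hnd) as [Hnd1 [Hnd2 Hdisj]]. fold ds1 ds2 in Hnd1, Hnd2, Hdisj.
    assert (Hin1 : forall e, In e ds1 -> In e ds) by (intros; eapply in_firstn; eauto).
    assert (Hin2 : forall e, In e ds2 -> In e ds) by (intros; eapply in_skipn; eauto).
    assert (Hlen1 : length ds1 = nb P) by (unfold ds1; rewrite length_firstn; lia).
    assert (Hlen2 : length ds2 = nb Q) by (unfold ds2; rewrite length_skipn; lia).
    destruct (HL0 ds1 (B ++ ds2)) as [M0 [HM0 HE]]; auto.
    + intros e He. apply Hav0. auto.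
    + intros e He Hin. apply in_app_iff in Hin. destruct Hin as [Hin|Hin].
      * apply (HavB e (Hin1 e He)). auto.
      * apply (Hdisj e He). auto.
    + intros b Hb. apply in_app_iff in Hb. destruct Hb as [Hb|Hb].
      * apply (freshA_par p b P Q (HB b Hb)).
      * apply HP. apply HavP. auto.
    + apply (entails_swaps p bQ ds2) in HE. rewrite !swaps_comp, swaps_chaneq in HE.
      rewrite (swaps_fresh_id _ bQ ds2 S) in HE;
        [|intros b Hb; apply H0; auto|intros d Hd; apply HS; apply HavS; auto].
      rewrite (swaps_fresh_id _ bQ ds2 K0) in HE;
        [|intros b Hb; eapply fresh_act_subj; [apply H0; auto|eauto]|intros d Hd; apply HK0; apply HavK; auto].
      rewrite (swaps_fresh_id _ bQ ds2 (openF P ds1)) in HE.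
      2:{ intros b Hb. apply HLF; auto. intros e He. apply HavF. auto. intro Hin. apply (HavbQ b (Hin1 b Hin)). auto. }
      2:{ intros d Hd. apply HO; [apply HavO; auto| intro Hin; apply (Hdisj d Hin); auto]. }
      rewrite HLQ in HE; auto; [|intros e He; apply HavQ; auto].
      exists (swaps nswap bQ ds2 M0). split.
      * intros b Hb. apply swaps_fresh_gen; auto.
        -- apply HM0. apply in_app_iff. auto.
        -- intro Hin. apply (HavB b (Hin2 b Hin)). auto.
        -- intros d Hd. apply HM0. apply in_app_iff. auto.
      * simpl. fold ds1 ds2. eapply aeq_ent; [|exact HE].
        eapply aeq_trans; [apply aeq_cong_l; apply aeq_comm|].
        eapply aeq_trans; [apply aeq_assoc|]. apply aeq_cong_r. apply aeq_comm.
  -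
    simpl in Hwg. destruct Hwg as [HwgP HwgQ].
    destruct (IHtrans Hal K0 HK HwgQ) as [L0 HL0].
    destruct (frame_K p P bP SP H) as [HlP [LQ HLQ]].
    destruct (OF_sem_list p Q bP) as [LF HLF]. { intros x Hx. apply H0; auto. }
    destruct (supp_ex _ S) as [LS HS]. destruct (supp_ex _ K0) as [LK HK0].
    destruct (freshA_supp p Q) as [LP HP]. destruct (openF_supp p Q) as [LO HO].
    exists (L0 ++ LQ ++ bP ++ LF ++ LS ++ LK ++ LP ++ LO).
    intros ds B Hnd Hl Hav HavB HB.
    assert (Hav0 := avoids_app_l _ _ _ Hav). apply avoids_app_r in Hav.
    assert (HavQ := avoids_app_l _ _ _ Hav). apply avoids_app_r in Hav.
    assert (HavbQ := avoids_app_l _ _ _ Hav). apply avoids_app_r in Hav.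
    assert (HavF := avoids_app_l _ _ _ Hav). apply avoids_app_r in Hav.
    assert (HavS := avoids_app_l _ _ _ Hav). apply avoids_app_r in Hav.
    assert (HavK := avoids_app_l _ _ _ Hav). apply avoids_app_r in Hav.
    assert (HavP := avoids_app_l _ _ _ Hav). apply avoids_app_r in Hav.
    rename Hav into HavO.
    simpl in Hl.
    set (ds1 := firstn (nb P) ds). set (ds2 := skipn (nb P) ds).
    destruct (nodup_split ds (nb P) Hnd) as [Hnd1 [Hnd2 Hdisj]]. fold ds1 ds2 in Hnd1, Hnd2, Hdisj.
    assert (Hin1 : forall e, In e ds1 -> In e ds) by (intros; eapply in_firstn; eauto).
    assert (Hin2 : forall e, In e ds2 -> In e ds) by (intros; eapply in_skipn; eauto).
    assert (Hlen1 : length ds1 = nb P) by (unfold ds1; rewrite length_firstn; lia).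
    assert (Hlen2 : length ds2 = nb Q) by (unfold ds2; rewrite length_skipn; lia).
    destruct (HL0 ds2 (B ++ ds1)) as [M0 [HM0 HE]]; auto.
    + intros e He. apply Hav0. auto.
    + intros e He Hin. apply in_app_iff in Hin. destruct Hin as [Hin|Hin].
      * apply (HavB e (Hin2 e He)). auto.
      * apply (Hdisj e Hin). auto.
    + intros b Hb. apply in_app_iff in Hb. destruct Hb as [Hb|Hb].
      * apply (freshA_par p b P Q (HB b Hb)).
      * apply HP. apply HavP. auto.
    + apply (entails_swaps p bP ds1) in HE. rewrite !swaps_comp, swaps_chaneq in HE.
      rewrite (swaps_fresh_id _ bP ds1 S) in HE;
        [|intros b Hb; apply H0; auto|intros d Hd; apply HS; apply HavS; auto].
      rewrite (swaps_fresh_id _ bP ds1 K0) in HE;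
        [|intros b Hb; eapply fresh_act_subj; [apply H0; auto|eauto]|intros d Hd; apply HK0; apply HavK; auto].
      rewrite (swaps_fresh_id _ bP ds1 (openF Q ds2)) in HE.
      2:{ intros b Hb. apply HLF; auto. intros e He. apply HavF. auto. intro Hin. apply (HavbQ b (Hin2 b Hin)). auto. }
      2:{ intros d Hd. apply HO; [apply HavO; auto| intro Hin; apply (Hdisj d Hd); auto]. }
      rewrite HLQ in HE; auto; [|intros e He; apply HavQ; auto].
      exists (swaps nswap bP ds1 M0). split.
      * intros b Hb. apply swaps_fresh_gen; auto.
        -- apply HM0. apply in_app_iff. auto.
        -- intro Hin. apply (HavB b (Hin1 b Hin)). auto.
        -- intros d Hd. apply HM0. apply in_app_iff. auto.
      * simpl. fold ds1 ds2. eapply aeq_ent; [|exact HE].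
        eapply aeq_trans; [apply aeq_cong_l; apply aeq_comm|].
        apply aeq_assoc.
  -
    simpl in Hwg. destruct (IHtrans Hal K0 HK Hwg) as [L0 HL0].
    destruct (supp_ex _ S) as [LS HS]. destruct (supp_ex _ K0) as [LK HK0].
    destruct (freshA_supp p P) as [LP HP].
    exists (b :: L0 ++ LS ++ LK ++ LP).
    intros [|d ds] B Hnd Hl Hav HavB HB; [discriminate|].
    simpl in Hl. injection Hl as Hl. inversion Hnd; subst.
    assert (Hd : ~ In d (b :: L0 ++ LS ++ LK ++ LP)) by (apply Hav; simpl; auto).
    simpl in Hd. rewrite !in_app_iff in Hd.
    assert (HdB : ~ In d B) by (apply HavB; simpl; auto).
    destruct (HL0 ds (d :: remove Nat.eq_dec b B)) as [M0 [HM0 HE]]; auto.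
    + intros e He Hin. apply (Hav e (or_intror He)). simpl. rewrite !in_app_iff. auto.
    + intros e He Hin. simpl in Hin. destruct Hin as [->|Hin]; [contradiction|].
      apply in_remove in Hin. apply (HavB e (or_intror He)). tauto.
    + intros x Hx. simpl in Hx. destruct Hx as [<-|Hx]; [apply HP; tauto|].
      apply in_remove in Hx. destruct Hx as [Hx1 Hx2]. eapply freshA_nu; eauto.
    + apply (entails_eqv p b d) in HE. rewrite comp_eqv, chaneq_eqv in HE.
      rewrite (fresh_swap_id _ b d S) in HE by (auto; apply HS; tauto).
      rewrite (fresh_swap_id _ b d K0) in HE by (first [apply HK0; tauto | eapply fresh_act_subj; eauto]).
      exists (nswap b d M0). split.
      * intros x Hx. destruct (Nat.eq_dec x b) as [->|Hxb].
        -- apply fresh_swap_self. apply HM0. simpl; auto.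
        -- apply fresh_swap_other; auto; [|intro; subst; contradiction].
           apply HM0. simpl. right. apply in_in_remove; auto.
      * simpl. exact HE.
  -
    simpl in Hwg. simpl in HK. injection HK as <-.
    destruct (IHtrans ltac:(discriminate) M eq_refl Hwg) as [L0 HL0].
    destruct (supp_ex _ S) as [LS HS]. destruct (supp_ex _ M) as [LK HK0].
    destruct (freshA_supp p P) as [LP HP].
    exists (b :: L0 ++ LS ++ LK ++ LP).
    intros [|d ds] B Hnd Hl Hav HavB HB; [discriminate|].
    simpl in Hl. injection Hl as Hl. inversion Hnd; subst.
    assert (Hd : ~ In d (b :: L0 ++ LS ++ LK ++ LP)) by (apply Hav; simpl; auto).
    simpl in Hd. rewrite !in_app_iff in Hd.
    assert (HdB : ~ In d B) by (apply HavB; simpl; auto).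
    destruct (HL0 ds (d :: remove Nat.eq_dec b B)) as [M0 [HM0 HE]]; auto.
    + intros e He Hin. apply (Hav e (or_intror He)). simpl. rewrite !in_app_iff. auto.
    + intros e He Hin. simpl in Hin. destruct Hin as [->|Hin]; [contradiction|].
      apply in_remove in Hin. apply (HavB e (or_intror He)). tauto.
    + intros x Hx. simpl in Hx. destruct Hx as [<-|Hx]; [apply HP; tauto|].
      apply in_remove in Hx. destruct Hx as [Hx1 Hx2]. eapply freshA_nu; eauto.
    + apply (entails_eqv p b d) in HE. rewrite comp_eqv, chaneq_eqv in HE.
      rewrite (fresh_swap_id _ b d S) in HE by (auto; apply HS; tauto).
      rewrite (fresh_swap_id _ b d M) in HE by (auto; apply HK0; tauto).
      exists (nswap b d M0). split.
      * intros x Hx. destruct (Nat.eq_dec x b) as [->|Hxb].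
        -- apply fresh_swap_self. apply HM0. simpl; auto.
        -- apply fresh_swap_other; auto; [|intro; subst; contradiction].
           apply HM0. simpl. right. apply in_in_remove; auto.
      * simpl. exact HE.
  -
    simpl in Hwg. destruct Hwg as [Hft HwgP].
    destruct (IHtrans Hal K0 HK (conj HwgP (conj Hft HwgP))) as [L0 HL0].
    exists []. intros ds B _ _ _ _ HB.
    destruct (fresh_list (L0 ++ B) (nb (Par P (Bang P)))) as [ds0 [Hnd0 [Hl0 Hav0]]].
    destruct (HL0 ds0 B Hnd0 Hl0 (avoids_app_l _ _ _ Hav0) (avoids_app_r _ _ _ Hav0)) as [M [HM HE]].
    { intros b Hb. apply freshA_par_intro; [apply freshA_bang|]; auto. }
    exists M. split; auto. simpl. eapply aeq_ent; [|exact HE]. apply aeq_cong_r. apply ft_openF. simpl. auto.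
  -
    destruct (tr_alpha_subj p al P' be Q' H1) as [Hs Ht].
    assert (Hal' : al <> ATau) by (intro E; apply Hal; auto).
    assert (HwgP : wg P) by (apply (alpha_wg p Q P (alpha_sym p P Q H0)); auto).
    destruct (IHtrans Hal' K0 ltac:(congruence) HwgP) as [L0 HL0].
    destruct (OA p P Q H0) as [Hn [L1 HL1]].
    exists (L0 ++ L1). intros ds B Hnd Hl Hav HavB HB.
    destruct (HL0 ds B Hnd ltac:(lia) (avoids_app_l _ _ _ Hav) HavB) as [M [HM HE]].
    { intros b Hb. eapply freshA_alpha; eauto. }
    exists M. split; auto. rewrite <- HL1; auto. lia. eapply avoids_app_r; eauto.
Qed.


Theorem mainTheorem5 (p : psi) (B : list name) (S : A p) (P P' : agent p)
    (al : action p) (K : T p) (bP : list name) (SP : A p) :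
  wf P ->
  (forall b, In b B -> freshA b P) ->
  trans S P al P' ->
  al <> ATau ->
  subj al = Some K ->
  frameR P bP SP ->
  (forall b, In b bP -> fresh b S /\ freshA b P /\ fresh b K /\ ~ In b B) ->
  exists M : T p, (forall b, In b B -> fresh b M) /\ entails (comp S SP) (chaneq M K).
Proof.
  intros Hwf HB Htr Hal Hsubj Hfr Hb.
  destruct (main p S P al P' Htr Hal K Hsubj (wf_wg p P Hwf)) as [L0 HL0].
  destruct (frame_K p P bP SP Hfr) as [Hl [LK HLK]].
  destruct (supp_ex _ S) as [LS HS]. destruct (supp_ex _ K) as [LKK HKK].
  destruct (fresh_list (L0 ++ LK ++ B ++ LS ++ LKK) (nb P)) as [ds [Hnd [Hlen Hav]]].
  assert (Hav0 := avoids_app_l _ _ _ Hav). apply avoids_app_r in Hav.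
  assert (Hav1 := avoids_app_l _ _ _ Hav). apply avoids_app_r in Hav.
  assert (Hav2 := avoids_app_l _ _ _ Hav). apply avoids_app_r in Hav.
  assert (Hav3 := avoids_app_l _ _ _ Hav). apply avoids_app_r in Hav.
  destruct (HL0 ds B Hnd Hlen Hav0 Hav2 HB) as [M0 [HM0 HE]].
  rewrite <- HLK in HE by auto.
  apply (entails_unswaps p bP ds) in HE.
  rewrite unswaps_comp, unswaps_chaneq, unswaps_swaps in HE.
  rewrite (unswaps_fresh_id _ bP ds S) in HE;
    [|intros b Hbb; apply Hb; auto|intros d Hd; apply HS; apply Hav3; auto].
  rewrite (unswaps_fresh_id _ bP ds K) in HE;
    [|intros b Hbb; apply Hb; auto|intros d Hd; apply HKK; apply Hav; auto].
  exists (unswaps nswap bP ds M0). split; auto.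
  intros x Hx. apply unswaps_fresh_pres; auto.
  - intro Hin. apply (Hb x Hin). auto.
  - intro Hin. apply (Hav2 x Hin). auto.
Qed.
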